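(* Let $(\mathcal{S},\mathcal{R})$ be an $r$-complete positive presentation. Then the monoid $\mathrm{Mon}(\mathcal{S};\mathcal{R})$ admits left cancellation (i.e. $xy=xz$ implies $y=z$) if and only if $u^{-1}v\curvearrowright_r\varepsilon$ holds for every relation of $\mathcal{R}$ of the form $su=sv$ with $s\in\mathcal{S}$ and $u,v\in\mathcal{S}^*$. In particular, a sufficient condition for $\mathrm{Mon}(\mathcal{S};\mathcal{R})$ to admit left cancellation is that $\mathcal{R}$ contains no relation $su=sv$ with $s\in\mathcal{S}$ and $u\neq v$.
   Context: A positive presentation is a pair $(\mathcal{S},\mathcal{R})$ where $\mathcal{S}$ is a nonempty set of letters and $\mathcal{R}$ is a family of relations $u=v$, i.e. unordered pairs $\{u,v\}$ of nonempty words in the free monoid $\mathcal{S}^*$. $\varepsilon$ denotes the empty word; $\equiv$ is the smallest congruence on $\mathcal{S}^*$ containing all pairs of $\mathcal{R}$, and $\mathrm{Mon}(\mathcal{S};\mathcal{R})=\mathcal{S}^*/{\equiv}$. Let $\mathcal{S}^{-1}=\{s^{-1}:s\in\mathcal{S}\}$ be a disjoint copy of $\mathcal{S}$; for $u\in\mathcal{S}^*$, $u^{-1}$ is obtained by reversing the order of the letters of $u$ and replacing each $s$ by $s^{-1}$. Right reversing: for words $\mathbf{w},\mathbf{w}'$ on $\mathcal{S}\cup\mathcal{S}^{-1}$ we write $\mathbf{w}\curvearrowright_r\mathbf{w}'$ if $\mathbf{w}'$ is obtained from $\mathbf{w}$ by a finite (possibly empty) sequence of steps, each of which either deletes a subword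 $u^{-1}u$ with $u\in\mathcal{S}^*$ nonempty, or replaces a subword $u^{-1}v$ with $u,v\in\mathcal{S}^*$ nonempty by a word $v'u'^{-1}$ with $u',v'\in\mathcal{S}^*$ such that $uv'=vu'$ is a relation of $\mathcal{R}$. $(\mathcal{S},\mathcal{R})$ is $r$-complete if for all $u,v,u',v'\in\mathcal{S}^*$ with $uv'\equiv vu'$ there exist $u'',v'',w\in\mathcal{S}^*$ with $u^{-1}v\curvearrowright_r v''u''^{-1}$, $u'\equiv u''w$ and $v'\equiv v''w$. *)

(* Defs.v *)
From Stdlib Require Import List.
Import ListNotations.
Set Implicit Arguments.

Section Presentations.
Variable S : Type.

(* A family of relations on S^* is given as a predicate R : list S -> list S -> Prop;
   a relation u = v is an UNORDERED pair, so "u = v is a relation of R" means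
   R u v or R v u. *)
Definition is_rel (R : list S -> list S -> Prop) (u v : list S) : Prop :=
  R u v \/ R v u.

Definition positive_relations (R : list S -> list S -> Prop) : Prop :=
  forall u v, R u v -> u <> [] /\ v <> [].

Inductive cong (R : list S -> list S -> Prop) : list S -> list S -> Prop :=
| cong_base : forall u v, R u v -> cong R u v
| cong_refl : forall u, cong R u u
| cong_sym : forall u v, cong R u v -> cong R v u
| cong_trans : forall u v w, cong R u v -> cong R v w -> cong R u w
| cong_ctx : forall x y u v, cong R u v -> cong R (x ++ u ++ y) (x ++ v ++ y).

Definition left_cancellative (R : list S -> list S -> Prop) : Prop :=
  forall x y z, cong R (x ++ y) (x ++ z) -> cong R y z.

Inductive sletter : Type := Pos (s : S) | Neg (s : S).

Definition pos (u : list S) : list sletter := map Pos u.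
(* u^{-1}: reverse the word and replace each s by s^{-1} *)
Definition neg (u : list S) : list sletter := rev (map Neg u).

Inductive rstep (R : list S -> list S -> Prop) : list sletter -> list sletter -> Prop :=
| rstep_del : forall w1 w2 u, u <> [] ->
    rstep R (w1 ++ neg u ++ pos u ++ w2) (w1 ++ w2)
| rstep_rel : forall w1 w2 u v u' v', u <> [] -> v <> [] ->
    is_rel R (u ++ v') (v ++ u') ->
    rstep R (w1 ++ neg u ++ pos v ++ w2) (w1 ++ pos v' ++ neg u' ++ w2).

Inductive rrev (R : list S -> list S -> Prop) : list sletter -> list sletter -> Prop :=
| rrev_refl : forall w, rrev R w w
| rrev_step : forall w1 w2 w3, rstep R w1 w2 -> rrev R w2 w3 -> rrev R w1 w3.

Definition r_complete (R : list S -> list S -> Prop) : Prop :=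
  forall u v u' v', cong R (u ++ v') (v ++ u') ->
    exists u'' v'' w,
      rrev R (neg u ++ pos v) (pos v'' ++ neg u'') /\
      cong R u' (u'' ++ w) /\ cong R v' (v'' ++ w).

End Presentations.

(* Main.v *)
Require Import Defs.
From Stdlib Require Import List Lia.
Import ListNotations.

Section Aux.
Variable S : Type.
Variable R : list S -> list S -> Prop.

Lemma congR u v y : cong R u v -> cong R (u ++ y) (v ++ y).
Proof. intro H. pose proof (cong_ctx [] y H) as H'. simpl in H'. exact H'. Qed.

Lemma congL x u v : cong R u v -> cong R (x ++ u) (x ++ v).
Proof. intro H. pose proof (cong_ctx x [] H) as H'. rewrite !app_nil_r in H'. exact H'. Qed.

Fixpoint Sem (w : list (sletter S)) (x y : list S) : Prop :=
  match w with
  | [] => cong R x y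
  | Pos s :: w => Sem w (x ++ [s]) y
  | Neg s :: w => exists z, cong R x (z ++ [s]) /\ Sem w z y
  end.

Lemma Sem_x w : forall x x' y, cong R x x' -> Sem w x y -> Sem w x' y.
Proof.
  induction w as [|[s|s] w IH]; simpl; intros x x' y H1 H2.
  - eapply cong_trans. apply cong_sym; eassumption. exact H2.
  - eapply IH; [|exact H2]. apply congR. exact H1.
  - destruct H2 as [z [Hz Hw]]. exists z. split; auto.
    eapply cong_trans. apply cong_sym; eassumption. exact Hz.
Qed.

Lemma Sem_app w1 : forall w2 x y,
  Sem (w1 ++ w2) x y <-> exists m, Sem w1 x m /\ Sem w2 m y.
Proof.
  induction w1 as [|[s|s] w1 IH]; simpl; intros w2 x y.
  - split.
    + intro H. exists x. split; [apply cong_refl|exact H].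
    + intros [m [Hm H]]. eapply Sem_x; [apply cong_sym; exact Hm|exact H].
  - apply IH.
  - split.
    + intros [z [Hz H]]. apply IH in H. destruct H as [m [H1 H2]].
      exists m. split; [exists z; auto|exact H2].
    + intros [m [[z [Hz H1]] H2]]. exists z. split; auto. apply IH. eauto.
Qed.

Lemma Sem_pos v : forall x y, Sem (pos v) x y <-> cong R (x ++ v) y.
Proof.
  induction v as [|s v IH]; simpl; intros x y.
  - rewrite app_nil_r. tauto.
  - rewrite IH. rewrite <- app_assoc. simpl. tauto.
Qed.

Lemma neg_cons (a : S) u : neg (a :: u) = neg u ++ [Neg a].
Proof. reflexivity. Qed.

Lemma Sem_neg u : forall x y, Sem (neg u) x y <-> cong R x (y ++ u).
Proof.
  induction u as [|a u IH]; intros x y.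
  - simpl. rewrite app_nil_r. tauto.
  - rewrite neg_cons, Sem_app. split.
    + intros [m [H1 H2]]. apply IH in H1. simpl in H2.
      destruct H2 as [z [Hz Hzy]].
      eapply cong_trans; [exact H1|].
      replace (y ++ a :: u) with ((y ++ [a]) ++ u) by (rewrite <- app_assoc; reflexivity).
      apply congR. eapply cong_trans; [exact Hz|]. apply congR. exact Hzy.
    + intro H. exists (y ++ [a]). split.
      * apply IH. rewrite <- app_assoc. exact H.
      * simpl. exists y. split; apply cong_refl.
Qed.

Lemma rstep_Sem w w' : rstep R w w' -> forall x y, Sem w x y -> Sem w' x y.
Proof.
  intros H. destruct H as [w1 w2 u Hu|w1 w2 u v u' v' Hu Hv Hr]; intros x y Hs.
  - apply Sem_app in Hs. destruct Hs as [m1 [H1 H2]].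
    apply Sem_app in H2. destruct H2 as [m2 [H2 H3]].
    apply Sem_app in H3. destruct H3 as [m3 [H3 H4]].
    apply Sem_app. exists m1. split; auto.
    apply Sem_neg in H2. apply Sem_pos in H3.
    eapply Sem_x; [|exact H4]. apply cong_sym. eapply cong_trans; [exact H2|exact H3].
  - apply Sem_app in Hs. destruct Hs as [m1 [H1 H2]].
    apply Sem_app in H2. destruct H2 as [m2 [H2 H3]].
    apply Sem_app in H3. destruct H3 as [m3 [H3 H4]].
    apply Sem_neg in H2. apply Sem_pos in H3.
    apply Sem_app. exists m1. split; auto.
    apply Sem_app. exists (m1 ++ v'). split. { apply Sem_pos. apply cong_refl. }
    apply Sem_app. exists m3. split; auto.
    apply Sem_neg.
    assert (Hc : cong R (u ++ v') (v ++ u')).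
    { destruct Hr as [Hr|Hr]; [apply cong_base; exact Hr|apply cong_sym, cong_base; exact Hr]. }
    eapply cong_trans. { apply congR. exact H2. }
    rewrite <- app_assoc. eapply cong_trans. { apply congL. exact Hc. }
    rewrite app_assoc. apply congR. exact H3.
Qed.

Lemma rrev_Sem w w' : rrev R w w' -> forall x y, Sem w x y -> Sem w' x y.
Proof.
  induction 1; auto. intros x y H'. apply IHrrev. eapply rstep_Sem; eauto.
Qed.

Lemma sound u v u'' v'' : rrev R (neg u ++ pos v) (pos v'' ++ neg u'') ->
  cong R (u ++ v'') (v ++ u'').
Proof.
  intro H. assert (Hs : Sem (neg u ++ pos v) u v).
  { apply Sem_app. exists []. split.
    - apply Sem_neg. apply cong_refl.
    - apply Sem_pos. apply cong_refl. }
  apply (rrev_Sem _ _ H) in Hs. apply Sem_app in Hs. destruct Hs as [m [H1 H2]].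
  apply Sem_pos in H1. apply Sem_neg in H2. eapply cong_trans; eauto.
Qed.

Lemma sound0 u v : rrev R (neg u ++ pos v) [] -> cong R u v.
Proof.
  intro H. assert (Hs : Sem (neg u ++ pos v) u v).
  { apply Sem_app. exists []. split.
    - apply Sem_neg. apply cong_refl.
    - apply Sem_pos. apply cong_refl. }
  exact (rrev_Sem _ _ H _ _ Hs).
Qed.

Lemma cong_nil : positive_relations R -> forall a b, cong R a b -> (a = [] <-> b = []).
Proof.
  intros HR a b H. induction H.
  - apply HR in H. tauto.
  - tauto.
  - tauto.
  - tauto.
  - split; intro E; apply app_eq_nil in E; destruct E as [E1 E]; apply app_eq_nil in E;
      destruct E as [E2 E3]; subst; simpl.
    + rewrite (proj1 IHcong eq_refl). reflexivity.
    + rewrite (proj2 IHcong eq_refl). reflexivity.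
Qed.

Fixpoint allneg (w : list (sletter S)) : Prop :=
  match w with [] => True | Neg _ :: w => allneg w | Pos _ :: _ => False end.
Fixpoint good (w : list (sletter S)) : Prop :=
  match w with [] => True | Pos _ :: w => good w | Neg _ :: w => allneg w end.

Lemma allneg_app x y : allneg (x ++ y) <-> allneg x /\ allneg y.
Proof. induction x as [|[s|s] x IH]; simpl; tauto. Qed.

Lemma allneg_neg b : allneg (neg b).
Proof. induction b as [|a b IH]; simpl; auto. rewrite neg_cons, allneg_app. simpl; auto. Qed.

Lemma allneg_good w : allneg w -> good w.
Proof. induction w as [|[s|s] w IH]; simpl; tauto. Qed.

Lemma good_pn a b : good (pos a ++ neg b).
Proof. induction a; simpl; auto. apply allneg_good, allneg_neg. Qed.

Lemma notgood x a b r : ~ good (x ++ Neg a :: Pos b :: r).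
Proof.
  induction x as [|[s|s] x IH]; simpl; auto.
  rewrite allneg_app. simpl. tauto.
Qed.

Lemma notgood2 w1 w2 u v : u <> [] -> v <> [] -> ~ good (w1 ++ neg u ++ pos v ++ w2).
Proof.
  intros Hu Hv. destruct u as [|a u]; [congruence|]. destruct v as [|b v]; [congruence|].
  rewrite neg_cons. simpl. rewrite <- !app_assoc. rewrite app_assoc. simpl. apply notgood.
Qed.

Lemma rstep_notgood w w' : rstep R w w' -> ~ good w.
Proof. destruct 1; apply notgood2; auto. Qed.

Lemma rrev_good w w' : rrev R w w' -> good w -> w = w'.
Proof. destruct 1; auto. intro G. exfalso. eapply rstep_notgood; eauto. Qed.

Lemma neg_inj (b d : list S) : neg b = neg d -> b = d.
Proof.
  unfold neg. intro H. apply (f_equal (@rev _)) in H. rewrite !rev_involutive in H.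
  revert d H. induction b; destruct d; simpl; intros H; try discriminate; auto.
  injection H; intros. f_equal; auto.
Qed.

Lemma pn_inj (a : list S) : forall b c d, pos a ++ neg b = pos c ++ neg d -> a = c /\ b = d.
Proof.
  induction a as [|x a IH]; intros b c d H; destruct c as [|y c]; simpl in H.
  - split; auto. apply neg_inj; auto.
  - exfalso. pose proof (allneg_neg b) as A. rewrite H in A. simpl in A. auto.
  - exfalso. pose proof (allneg_neg d) as A. rewrite <- H in A. simpl in A. auto.
  - injection H; intros H1 H2. subst. apply IH in H1. destruct H1; subst; auto.
Qed.

Lemma len_pos (u : list S) : length (pos u) = length u.
Proof. unfold pos. apply length_map. Qed.
Lemma len_neg (u : list S) : length (neg u) = length u.
Proof. unfold neg. rewrite length_rev. apply length_map. Qed.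

Lemma rstep_nil w w' : rstep R w w' -> w <> [].
Proof.
  destruct 1 as [w1 w2 u Hu|w1 w2 u v u' v' Hu Hv Hr]; intro E;
  apply (f_equal (@length _)) in E; rewrite !length_app, len_neg, len_pos in E;
  destruct u; try congruence; simpl in E; lia.
Qed.

Lemma rrev_nil w : rrev R [] w -> w = [].
Proof.
  intro H. inversion H; subst; auto. exfalso. eapply rstep_nil; eauto.
Qed.

Lemma key (Hhyp : forall (s : S) (u v : list S), is_rel R (s :: u) (s :: v) ->
        rrev R (neg u ++ pos v) [])
  s u'' v'' : rrev R (neg [s] ++ pos [s]) (pos v'' ++ neg u'') -> cong R v'' u''.
Proof.
  intro H. inversion H as [w E|w1 w2 w3 Hst Hr E1 E3].
  - exfalso. pose proof (good_pn v'' u'') as G. match goal with E : _ = pos _ ++ neg _ |- _ => rewrite <- E in G end. simpl in G. auto.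
  - subst. remember (neg [s] ++ pos [s]) as w0 eqn:Ew.
    destruct Hst as [w1 w2 u Hu|w1 w2 u v u' v' Hu Hv Hrel].
    + assert (L := f_equal (@length _) Ew). rewrite !length_app, len_neg, len_pos in L.
      simpl in L. destruct u as [|a [|b u]]; simpl in L; try congruence; try lia.
      destruct w1; [|simpl in L; lia]. destruct w2; [|simpl in L; lia].
      simpl in Hr. apply rrev_nil in Hr.
      assert (L2 := f_equal (@length _) Hr). rewrite length_app, len_neg, len_pos in L2.
      simpl in L2. destruct v'', u''; simpl in L2; try lia. apply cong_refl.
    + assert (L := f_equal (@length _) Ew). rewrite !length_app, len_neg, len_pos in L.
      simpl in L. destruct u as [|a [|b u]]; simpl in L; try congruence; try (destruct v; [congruence|]; simpl in L; lia).
      destruct v as [|c [|d v]]; simpl in L; try congruence; try lia.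
      destruct w1; [|simpl in L; lia]. destruct w2; [|simpl in L; lia].
      simpl in Ew. injection Ew; intros; subst.
      rewrite app_nil_r in Hr. apply rrev_good in Hr; [|apply good_pn].
      apply pn_inj in Hr. destruct Hr; subst.
      apply sound0. apply (Hhyp s). exact Hrel.
Qed.

End Aux.

Theorem proposition6p1 (S : Type) (R : list S -> list S -> Prop)
  (HS : inhabited S) (HR : positive_relations R) (Hc : r_complete R) :
  (left_cancellative R <->
     (forall (s : S) (u v : list S), is_rel R (s :: u) (s :: v) ->
        rrev R (neg u ++ pos v) []))
  /\
  ((forall (s : S) (u v : list S), is_rel R (s :: u) (s :: v) -> u = v) ->
     left_cancellative R).
Proof.
  assert (Back : (forall (s : S) (u v : list S), is_rel R (s :: u) (s :: v) ->
        rrev R (neg u ++ pos v) []) -> left_cancellative R).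
  { intros Hh x. induction x as [|a x IH]; intros y z H; [exact H|].
    apply IH.
    destruct (Hc [a] [a] (x ++ z) (x ++ y) H) as [u'' [v'' [w [H1 [H2 H3]]]]].
    pose proof (key _ _ Hh _ _ _ H1) as K.
    eapply cong_trans; [exact H3|]. eapply cong_trans; [apply congR; exact K|].
    apply cong_sym; exact H2. }
  split; [split|].
  - intros HL s u v Hrel.
    assert (Hc0 : cong R (s :: u) (s :: v)).
    { destruct Hrel as [Hr|Hr]; [apply cong_base; exact Hr|apply cong_sym, cong_base; exact Hr]. }
    apply (HL [s]) in Hc0.
    destruct (Hc u v [] [] ltac:(rewrite !app_nil_r; exact Hc0)) as [u'' [v'' [w [H1 [H2 H3]]]]].
    apply (cong_nil _ _ HR) in H2. apply (cong_nil _ _ HR) in H3.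
    destruct H2 as [H2 _]. destruct H3 as [H3 _].
    specialize (H2 eq_refl). specialize (H3 eq_refl).
    apply app_eq_nil in H2. apply app_eq_nil in H3.
    destruct H2 as [-> _]. destruct H3 as [-> _]. exact H1.
  - exact Back.
  - intros Hh. apply Back. intros s u v Hrel. apply Hh in Hrel. subst v.
    destruct u as [|a u]; [apply rrev_refl|].
    eapply rrev_step; [|apply rrev_refl].
    pose proof (@rstep_del S R [] [] (a :: u) ltac:(congruence)) as St.
    rewrite !app_nil_r in St. simpl in St. exact St.
Qed.
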